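(* Let $0<\mu<L$ and $q:=\mu/L\in(0,1)$. For $\alpha,\beta,\gamma\in\mathbb{R}$ and $\lambda\in[\mu,L]$, let $$T_\lambda(\alpha,\beta,\gamma):=\begin{pmatrix}(1+\beta)(1-\alpha\lambda)-\gamma\alpha\lambda & -\beta(1-\alpha\lambda)\\ 1 & 0\end{pmatrix}\in\mathbb{R}^{2\times 2},$$ and define $\rho(\alpha,\beta,\gamma):=\max_{\mu\le\lambda\le L}\rho\big(T_\lambda(\alpha,\beta,\gamma)\big)$, where $\rho(\cdot)$ of a matrix denotes its spectral radius. Set $$\gamma^\star:=\frac{2+q-\sqrt{q^2+8q}}{2},\qquad \beta^\star:=\frac{(\gamma^\star)^2}{1-q}=\frac{\big(2+q-\sqrt{q^2+8q}\big)^2}{4(1-q)}.$$ Then $(\beta^\star,\gamma^\star)$ minimizes $(\beta,\gamma)\mapsto\rho(1/L,\beta,\gamma)$ over $\mathbb{R}^2$, with minimum value $$\rho(1/L,\beta^\star,\gamma^\star)=1-\sqrt{q(1+\gamma^\star)}=\gamma^\star .$$ Moreover, $$\frac{2+q-\sqrt{q^2+8q}}{2}\;\le\;1-\frac{2\sqrt{q}}{\sqrt{3+q}}\;\le\;1-\sqrt{q}.$$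
   Context: This concerns the iteration $y_{k+1}=x_k-\alpha\nabla f(x_k)$, $x_{k+1}=y_{k+1}+\beta(y_{k+1}-y_k)+\gamma(y_{k+1}-x_k)$ applied to a strongly convex quadratic $f(x)=\tfrac12 x^\top Qx-p^\top x$ with $Q$ symmetric positive definite with eigenvalues in $[\mu,L]$; writing $\xi_k=(x_k^\top,x_{k-1}^\top)^\top$, the error evolves as $\xi_{k+1}-\xi_*=T(\alpha,\beta,\gamma)(\xi_k-\xi_* )$, and for each eigenvalue $\lambda$ of $Q$ the corresponding $2\times2$ block is $T_\lambda(\alpha,\beta,\gamma)$ above. The method with $\alpha=1/L$, $\beta=\beta^\star$, $\gamma=\gamma^\star$ is called OGM-$q$; the quantities $1-\sqrt q$ and $1-2\sqrt q/\sqrt{3+q}$ are the corresponding worst-case spectral radii of two Nesterov-type variants with $\gamma=0$. *)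

(* Defs.v *)
From HB Require Import structures.
From mathcomp Require Import all_boot all_order all_algebra.
From mathcomp Require Import all_classical all_reals.
From mathcomp.real_closed Require Import complex.

Set Implicit Arguments.
Unset Strict Implicit.
Unset Printing Implicit Defensive.

Import Order.TTheory GRing.Theory Num.Theory.
Local Open Scope ring_scope.
Local Open Scope classical_set_scope.

Section Defs.
Variable R : realType.

Definition Tmat (a b g l : R) : 'M[R]_2 :=
  \matrix_(i < 2, j < 2)
    if (val i == 0%N) then
      (if (val j == 0%N) then (1 + b) * (1 - a * l) - g * a * l
       else - b * (1 - a * l))
    else (if (val j == 0%N) then 1 else 0).

Definition specrad (A : 'M[R]_2) : R :=
  sup [set Normc.normc z | z in
        [set z : R[i] | eigenvalue (map_mx (fun x : R => x%:C%C) A) z]].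

Definition rho_worst (mu L a b g : R) : R :=
  sup [set specrad (Tmat a b g l) | l in `[mu, L]%classic].

End Defs.

(* Main.v *)
Require Import Defs.
From HB Require Import structures.
From mathcomp Require Import all_boot all_order all_algebra.
From mathcomp Require Import all_classical all_reals.
From mathcomp.real_closed Require Import complex.
From mathcomp Require Import ring lra.
Import Order.TTheory GRing.Theory Num.Theory.
Local Open Scope ring_scope.
Local Open Scope classical_set_scope.

Section S.
Variable R : realType.
Local Notation C := (R[i]).

Definition rooteq (t d : R) (z : C) := z * z - t%:C%C * z + d%:C%C = 0.

Lemma eigT (a b g l : R) (z : C) :
  eigenvalue (map_mx (fun x : R => x%:C%C) (Tmat a b g l)) z <->
  rooteq ((1 + b) * (1 - a * l) - g * a * l) (b * (1 - a * l)) z.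
Proof.
rewrite /rooteq.
set t := (1 + b) * (1 - a * l) - g * a * l.
set d := b * (1 - a * l).
have c0 : (0:R)%:C%C = 0 :> C by [].
have c1 : (1:R)%:C%C = 1 :> C by [].
have cN : (- b * (1 - a * l))%:C%C = - d%:C%C :> C.
  by apply/eqP; rewrite eq_complex /= /d mulNr oppr0 !eqxx.
split.
- move/eigenvalueP => [v Hv vnz].
  have e0 := congr1 (fun M : 'M[C]_(1,2) => M 0 0) Hv.
  have e1 := congr1 (fun M : 'M[C]_(1,2) => M 0 1) Hv.
  move: e0 e1; rewrite /= !mxE !big_ord_recl !big_ord0 /= !mxE /= -/t.
  rewrite c0 c1 cN.
  have -> : v 0 0 = v 0 ord0 by congr (v _ _); apply: val_inj.
  have -> : v 0 1 = v 0 (lift ord0 ord0) by congr (v _ _); apply: val_inj.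
  set v0 := v 0 ord0; set v1 := v 0 (lift ord0 ord0).
  move=> e0 e1.
  have v0nz : v0 != 0.
    apply: contra vnz => /eqP v00; apply/eqP/rowP => j.
    have v10 : v1 = 0 by move: e0; rewrite v00 mul0r add0r mulr1 addr0 mulr0.
    rewrite mxE; case: j => [[|[|//]]] Hj.
      by rewrite -v00 /v0; congr (v 0 _); apply: val_inj.
    by rewrite -v10 /v1; congr (v 0 _); apply: val_inj.
  apply: (mulIf v0nz); rewrite mul0r.
  have e0' : v1 = z * v0 - t%:C%C * v0.
    by rewrite -e0; ring.
  rewrite e0' in e1.
  rewrite mulr0 addr0 in e1.
  have -> : (z * z - t%:C%C * z + d%:C%C) * v0 = z * (z * v0 - t%:C%C * v0) - v0 * - d%:C%C by ring.
  rewrite -e1; ring.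
- move=> hz; apply/eigenvalueP.
  exists (\row_(j < 2) if val j == 0%N then 1 else z - t%:C%C).
    apply/rowP => j; rewrite !mxE !big_ord_recl !big_ord0 /= !mxE /= -/t ?c0 ?c1 ?cN.
    case: j => [[|[|//]]] Hj /=; rewrite ?mxE /=.
      rewrite c1; ring.
    rewrite c0 cN; apply/eqP; rewrite -subr_eq0; apply/eqP.
    transitivity (- (z * z - t%:C%C * z + d%:C%C)); first ring.
    by rewrite hz oppr0.
  apply/eqP => /rowP /(_ 0); rewrite !mxE /=.
  by apply/eqP; rewrite oner_eq0.
Qed.

Lemma rooteq_comp (t d x y : R) :
  rooteq t d (x +i* y)%C <-> (x ^+ 2 - y ^+ 2 - t * x + d = 0 /\ 2 * x * y - t * y = 0).
Proof.
rewrite /rooteq; split.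
- move/eqP; rewrite eq_complex /=.
  by move=> /andP[/eqP h1 /eqP h2]; split; [rewrite -h1|rewrite -h2]; ring.
- move=> [h1 h2]; apply/eqP; rewrite eq_complex /=; apply/andP; split; apply/eqP;
  [transitivity (x ^+ 2 - y ^+ 2 - t * x + d) | transitivity (2 * x * y - t * y)]; by [ring|].
Qed.

Lemma normc_sq (x y : R) : Normc.normc (x +i* y)%C ^+ 2 = x ^+ 2 + y ^+ 2.
Proof. by rewrite /= sqr_sqrtr // addr_ge0 // sqr_ge0. Qed.

Lemma normc_ge0 (z : C) : 0 <= Normc.normc z.
Proof. by case: z => x y; rewrite /= sqrtr_ge0. Qed.

Lemma normc_le (x y r : R) : 0 <= r -> x ^+ 2 + y ^+ 2 <= r ^+ 2 ->
  Normc.normc (x +i* y)%C <= r.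
Proof.
move=> hr h; rewrite /= -(ger0_norm hr) -sqrtr_sqr ler_sqrt //.
exact: sqr_ge0.
Qed.

Lemma root_im (t d x y : R) : rooteq t d (x +i* y)%C -> y != 0 ->
  t = 2 * x /\ d = x ^+ 2 + y ^+ 2.
Proof.
move=> /rooteq_comp [h1 h2] yn0.
have ht : t = 2 * x.
  apply/eqP; rewrite eq_sym -subr_eq0; apply/eqP; apply: (mulIf yn0).
  by rewrite mul0r -h2; ring.
split => //; rewrite ht in h1.
apply/eqP; rewrite -subr_eq0; apply/eqP; rewrite -h1; ring.
Qed.

Lemma root_le t d r z : 0 <= r -> d <= r ^+ 2 -> 0 <= r ^+ 2 - t * r + d ->
  0 <= r ^+ 2 + t * r + d -> t <= 2 * r -> - (2 * r) <= t ->
  rooteq t d z -> Normc.normc z <= r.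
Proof.
move=> hr hd hp hm ht1 ht2; case: z => x y hz.
apply: normc_le => //.
have [y0|yn0] := eqVneq y 0.
  subst y; move/rooteq_comp: hz => [h1 _].
  have [hx1|hx1] := lerP x r; have [hx2|hx2] := lerP (- r) x.
  - nra.
  - nra.
  - have h3 : 0 <= (x - r) * (2 * r - t) by apply: mulr_ge0; lra.
    nra.
  - lra.
by have [_ <-] := @root_im t d x y hz yn0.
Qed.


Lemma normc_lt_sq (x y r : R) : Normc.normc (x +i* y)%C < r -> x ^+ 2 + y ^+ 2 < r ^+ 2.
Proof.
move=> h; rewrite -normc_sq; have h0 := normc_ge0 (x +i* y)%C.
set n := Normc.normc _ in h h0 *; nra.
Qed.

Lemma root_bnd t d z : rooteq t d z -> Normc.normc z <= 1 + `|t| + `|d|.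
Proof.
have hA := normr_ge0 t; have hB := normr_ge0 d.
case: z => x y hz; apply: normc_le; first lra.
have [y0|yn0] := eqVneq y 0.
  subst y; move/rooteq_comp: hz => [h1 _].
  have hax := normr_ge0 x.
  have hx2 : x ^+ 2 = `|x| ^+ 2 by rewrite real_normK // num_real.
  have htx : t * x <= `|t| * `|x| by rewrite -normrM ler_norm.
  have hd : - d <= `|d| by rewrite -normrN ler_norm.
  have [hl|hl] := lerP `|x| (1 + `|t| + `|d|).
    rewrite expr0n /= addr0 hx2; nra.
  nra.
have [_ hd] := @root_im t d x y hz yn0.
rewrite -hd; have := ler_norm d; nra.
Qed.

Lemma root_low t d r : 0 < r -> (forall z, rooteq t d z -> Normc.normc z < r) ->
  d < r ^+ 2 /\ 0 < r ^+ 2 - t * r + d.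
Proof.
move=> hr H.
have [hD|hD] := ltrP (t ^+ 2 - 4 * d) 0.
  set sd := Num.sqrt (- (t ^+ 2 - 4 * d)).
  have hsd : sd ^+ 2 = - (t ^+ 2 - 4 * d) by rewrite sqr_sqrtr // oppr_ge0 ltW.
  have hz : rooteq t d ((t / 2) +i* (sd / 2))%C.
    apply/rooteq_comp; split.
    + apply/eqP; rewrite -subr_eq0; apply/eqP.
      transitivity ((t ^+ 2 - 4 * d + sd ^+ 2) / 4 * (-1)); first by field.
      by rewrite hsd subrr !mul0r.
    + by field.
  have h := @normc_lt_sq _ _ _ (H _ hz).
  have e : (t / 2) ^+ 2 + (sd / 2) ^+ 2 = d.
    transitivity ((t ^+ 2 + sd ^+ 2) / 4); first by field.
    by rewrite hsd; field.
  rewrite e in h.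
  idtac "HERE".
  match goal with |- ?G => idtac G end.
  split; [lra | nra].
set sd2 := Num.sqrt (t ^+ 2 - 4 * d).
have hsd : sd2 ^+ 2 = t ^+ 2 - 4 * d by rewrite sqr_sqrtr.
have hsd0 : 0 <= sd2 by apply: sqrtr_ge0.
have hz1 : rooteq t d (((t + sd2) / 2) +i* 0)%C.
  apply/rooteq_comp; split; last by ring.
  apply/eqP; rewrite -subr_eq0; apply/eqP.
  transitivity ((sd2 ^+ 2 - (t ^+ 2 - 4 * d)) / 4); first by field.
  by rewrite hsd subrr !mul0r.
have hz2 : rooteq t d (((t - sd2) / 2) +i* 0)%C.
  apply/rooteq_comp; split; last by ring.
  apply/eqP; rewrite -subr_eq0; apply/eqP.
  transitivity ((sd2 ^+ 2 - (t ^+ 2 - 4 * d)) / 4); first by field.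
  by rewrite hsd subrr !mul0r.
have h1 := @normc_lt_sq _ _ _ (H _ hz1); have h2 := @normc_lt_sq _ _ _ (H _ hz2).
set x1 := (t + sd2) / 2 in h1; set x2 := (t - sd2) / 2 in h2.
rewrite expr0n /= addr0 in h1 h2.
have b1 : - r < x1 < r by apply/andP; split; nra.
have b2 : - r < x2 < r by apply/andP; split; nra.
move/andP: b1 => [b11 b12]; move/andP: b2 => [b21 b22].
have hd : d = x1 * x2.
  rewrite /x1 /x2; apply/eqP; rewrite -subr_eq0; apply/eqP.
  transitivity ((sd2 ^+ 2 - (t ^+ 2 - 4 * d)) / 4); first by field.
  by rewrite hsd subrr !mul0r.
have ht : t = x1 + x2 by rewrite /x1 /x2; field.
rewrite hd ht; split; nra.
Qed.


Definition tT (a b g l : R) := (1 + b) * (1 - a * l) - g * a * l.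
Definition dT (a b l : R) := b * (1 - a * l).

Lemma specrad_le a b g l r : 0 <= r ->
  (forall z, rooteq (tT a b g l) (dT a b l) z -> Normc.normc z <= r) ->
  specrad (Tmat a b g l) <= r.
Proof.
move=> hr H; rewrite /specrad.
set S := (X in sup X).
have [[y Sy]|hne] := pselect (S !=set0).
  apply: ge_sup; first by exists y.
  by move=> w [z /= hz <-]; apply: H; apply/eigT.
have -> : S = set0.
  apply/seteqP; split => w // Sw; exfalso; apply: hne; by exists w.
by rewrite sup0.
Qed.

Lemma specrad_ge a b g l z : rooteq (tT a b g l) (dT a b l) z ->
  Normc.normc z <= specrad (Tmat a b g l).
Proof.
move=> hz; rewrite /specrad; apply: ub_le_sup.
  exists (1 + `|tT a b g l| + `|dT a b l|) => w [z' /= hz' <-].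
  by apply: root_bnd; apply/eigT.
by exists z => //=; apply/eigT.
Qed.

Lemma specrad_bnd a b g l :
  specrad (Tmat a b g l) <= 1 + `|tT a b g l| + `|dT a b l|.
Proof.
apply: specrad_le; last by move=> z; apply: root_bnd.
have h3 := normr_ge0 (tT a b g l); have h4 := normr_ge0 (dT a b l); lra.
Qed.


Lemma tbound (a b g l : R) : 0 <= a * l <= 1 ->
  specrad (Tmat a b g l) <= 1 + `|1 + b| + `|g| + `|b|.
Proof.
move=> /andP[hu0 hu1].
apply: le_trans (specrad_bnd a b g l) _.
set u := a * l in hu0 hu1 *.
have e : tT a b g l = (1 + b) * (1 - u) - g * u by rewrite /tT -mulrA.
have h1 : `|tT a b g l| <= `|1 + b| + `|g|.
  rewrite e; apply: le_trans (ler_normB _ _) _.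
  rewrite normrM [`|g * u|]normrM.
  have hw : 0 <= 1 - u by rewrite subr_ge0.
  rewrite (ger0_norm hu0) (ger0_norm hw).
  have h3 := normr_ge0 (1 + b); have h4 := normr_ge0 g.
  have h5 : 0 <= `|1 + b| * u by apply: mulr_ge0.
  have h6 : 0 <= `|g| * (1 - u) by apply: mulr_ge0; lra.
  nra.
have h2 : `|dT a b l| <= `|b|.
  have hw : 0 <= 1 - u by rewrite subr_ge0.
  rewrite /dT -/u normrM (ger0_norm hw).
  have h3 := normr_ge0 b; have h5 : 0 <= `|b| * u by apply: mulr_ge0.
  nra.
lra.
Qed.

Lemma rho_ge (mu L b g l : R) : 0 < mu -> mu < L -> mu <= l <= L ->
  specrad (Tmat (1 / L) b g l) <= rho_worst mu L (1 / L) b g.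
Proof.
move=> hmu hL hl; rewrite /rho_worst; apply: ub_le_sup.
  exists (1 + `|1 + b| + `|g| + `|b|) => w [l' hl' <-].
  apply: tbound; move: hl'; rewrite /= in_itv /= => /andP[h1 h2].
  have hL0 : 0 < L by exact: lt_trans hmu hL.
  rewrite mul1r; apply/andP; split.
    by apply: mulr_ge0; [rewrite invr_ge0|]; lra.
  by rewrite mulrC ler_pdivrMr // mul1r.
by exists l => //=; rewrite in_itv.
Qed.

Lemma rho_le (mu L a b g r : R) : mu <= L ->
  (forall l, mu <= l <= L -> specrad (Tmat a b g l) <= r) ->
  rho_worst mu L a b g <= r.
Proof.
move=> hL H; rewrite /rho_worst; apply: ge_sup.
  by exists (specrad (Tmat a b g mu)), mu => //=; rewrite in_itv /= lexx hL.
move=> w [l hl <-]; apply: H; by move: hl; rewrite /= in_itv.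
Qed.

End S.
Arguments rooteq {R}.
Arguments eigT {R}.
Arguments rooteq_comp {R}.
Arguments normc_sq {R}.
Arguments normc_ge0 {R}.
Arguments normc_le {R}.
Arguments root_im {R}.
Arguments root_le {R t d r z}.
Arguments normc_lt_sq {R}.
Arguments root_bnd {R}.
Arguments root_low {R t d r}.
Arguments tT {R}.
Arguments dT {R}.
Arguments specrad_le {R a b g l r}.
Arguments specrad_ge {R a b g l z}.
Arguments specrad_bnd {R}.
Arguments tbound {R}.
Arguments rho_ge {R mu L b g l}.
Arguments rho_le {R mu L a b g r}.

Theorem mainTheorem1 (R : realType) (mu L : R) (hmu : 0 < mu) (hmuL : mu < L) :
  let q := mu / L in
  let gs := (2 + q - Num.sqrt (q ^+ 2 + 8 * q)) / 2 in
  let bs := gs ^+ 2 / (1 - q) in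
  bs = (2 + q - Num.sqrt (q ^+ 2 + 8 * q)) ^+ 2 / (4 * (1 - q)) /\
  (forall b g : R, rho_worst mu L (1 / L) bs gs <= rho_worst mu L (1 / L) b g) /\
  rho_worst mu L (1 / L) bs gs = 1 - Num.sqrt (q * (1 + gs)) /\
  1 - Num.sqrt (q * (1 + gs)) = gs /\
  gs <= 1 - 2 * Num.sqrt q / Num.sqrt (3 + q) /\
  1 - 2 * Num.sqrt q / Num.sqrt (3 + q) <= 1 - Num.sqrt q.
Proof.
move=> q gs bs.
have hL : 0 < L by exact: lt_trans hmu hmuL.
have hq0 : 0 < q by rewrite /q divr_gt0.
have hq1 : q < 1 by rewrite /q ltr_pdivrMr // mul1r.
have haL : 1 / L * L = 1 by rewrite mul1r mulVf // gt_eqF.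
have haM : 1 / L * mu = q by rewrite mul1r mulrC.
set s := Num.sqrt (q ^+ 2 + 8 * q) in gs bs *.
have hs : s ^+ 2 = q ^+ 2 + 8 * q by rewrite sqr_sqrtr //; nra.
have hs0 : 0 <= s by apply: sqrtr_ge0.
have hgsdef : gs = (2 + q - s) / 2 by [].
have hbsdef : bs = gs ^+ 2 / (1 - q) by [].
clearbody gs bs s q.
have hS0 : 1 - q != 0 by rewrite subr_eq0 eq_sym lt_eqF.
have hquad : gs ^+ 2 - (2 + q) * gs + (1 - q) = 0.
  rewrite hgsdef; transitivity ((s ^+ 2 - (q ^+ 2 + 8 * q)) / 4); first by field.
  by rewrite hs subrr mul0r.
have hr0 : 0 < gs by rewrite hgsdef; nra.
have hr1 : gs < 1 by rewrite hgsdef; nra.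
have hbsS : bs * (1 - q) = gs ^+ 2 by rewrite hbsdef mulrVK ?unitfE.
have hbs0 : 0 <= bs by rewrite hbsdef divr_ge0 ?sqr_ge0 // subr_ge0 ltW.
have hsq : Num.sqrt (q * (1 + gs)) = 1 - gs.
  have -> : q * (1 + gs) = (1 - gs) ^+ 2.
    apply/eqP; rewrite -subr_eq0; apply/eqP.
    transitivity (- (gs ^+ 2 - (2 + q) * gs + (1 - q))); first by ring.
    by rewrite hquad oppr0.
  by rewrite sqrtr_sqr ger0_norm // subr_ge0 ltW.
have hrho : rho_worst mu L (1 / L) bs gs = gs.
  apply/eqP; rewrite eq_le; apply/andP; split.
    apply: rho_le (ltW hmuL) _ => l /andP[hl1 hl2].
    apply: specrad_le (ltW hr0) _ => z hz.
    have hLi : 0 < 1 / L by rewrite mul1r invr_gt0.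
    have hu1 : 1 / L * l <= 1 / L * L by rewrite ler_pM2l.
    rewrite haL in hu1.
    have hu0 : 1 / L * mu <= 1 / L * l by rewrite ler_pM2l.
    rewrite haM in hu0.
    have et : tT (1 / L) bs gs l = (1 + bs) * (1 - 1 / L * l) - gs * (1 / L * l).
      by rewrite /tT -mulrA.
    move: hz; rewrite et /dT.
    set u := 1 / L * l in hu0 hu1 *.
    move=> hz.
    have key : (1 - q) * (gs ^+ 2 - ((1 + bs) * (1 - u) - gs * u) * gs + bs * (1 - u))
      = 2 * gs ^+ 2 * (u - q) - (1 - u) * gs * (gs ^+ 2 - (2 + q) * gs + (1 - q))
        + (bs * (1 - q) - gs ^+ 2) * (1 - u) * (1 - gs) by ring.
    rewrite hquad hbsS subrr !mulr0 !mul0r subr0 addr0 in key.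
    have hk : 0 <= 2 * gs ^+ 2 * (u - q) by apply: mulr_ge0; nra.
    apply: (root_le (ltW hr0) _ _ _ _ _ hz).
    - nra.
    - nra.
    - nra.
    - nra.
    - nra.
  apply: le_trans (rho_ge (b:=bs) (g:=gs) (l:=L) hmu hmuL _); last by rewrite (ltW hmuL) lexx.
  have hz : rooteq (tT (1 / L) bs gs L) (dT (1 / L) bs L) ((- gs) +i* 0)%C.
    by apply/rooteq_comp; rewrite /tT /dT -mulrA haL; split; ring.
  apply: le_trans (specrad_ge hz).
  by rewrite /= expr0n /= addr0 sqrtr_sqr normrN ger0_norm // ltW.
split.
  by rewrite hbsdef hgsdef; field.
split.
  move=> b g; rewrite hrho leNgt; apply/negP => hlt.
  have hzL : rooteq (tT (1 / L) b g L) (dT (1 / L) b L) ((- g) +i* 0)%C.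
    by apply/rooteq_comp; rewrite /tT /dT -mulrA haL; split; ring.
  have hgL : `|g| < gs.
    have := specrad_ge hzL.
    rewrite /= expr0n /= addr0 sqrtr_sqr normrN => h.
    apply: le_lt_trans h _; apply: le_lt_trans hlt.
    by apply: rho_ge => //; rewrite (ltW hmuL) lexx.
  have [hd hp] : dT (1 / L) b mu < gs ^+ 2 /\ 0 < gs ^+ 2 - tT (1 / L) b g mu * gs + dT (1 / L) b mu.
    apply: root_low hr0 _ => z hz.
    apply: le_lt_trans hlt; apply: le_trans (specrad_ge hz) _.
    by apply: rho_ge => //; rewrite lexx ltW.
  move: hd hp; rewrite /tT /dT -mulrA haM => hd hp.
  have hg := ler_norm g.
  have hgg : 0 < gs - g by rewrite subr_gt0; exact: le_lt_trans hg hgL.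
  have h1 : 0 < (gs - g) * q * gs by apply: mulr_gt0; [apply: mulr_gt0; [exact: hgg | exact: hq0] | exact: hr0].
  have h2 : 0 < (gs ^+ 2 - b * (1 - q)) * (1 - gs) by apply: mulr_gt0; rewrite subr_gt0.
  have e : gs ^+ 2 - ((1 + b) * (1 - q) - g * q) * gs + b * (1 - q) =
    - gs * (gs ^+ 2 - (2 + q) * gs + (1 - q)) - (gs - g) * q * gs
    - (gs ^+ 2 - b * (1 - q)) * (1 - gs) by ring.
  rewrite hquad mulr0 ?oppr0 sub0r in e.
  move: hp; rewrite e; clear -h1 h2; lra.
split; first by rewrite hrho hsq; ring.
split; first by rewrite hsq; ring.
have hA0 : 0 < Num.sqrt q by rewrite sqrtr_gt0.
have hA := sqr_sqrtr (ltW hq0).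
have hB0 : 0 < Num.sqrt (3 + q) by rewrite sqrtr_gt0; lra.
have hB : Num.sqrt (3 + q) ^+ 2 = 3 + q by rewrite sqr_sqrtr //; lra.
set A := Num.sqrt q in hA0 hA *; set B := Num.sqrt (3 + q) in hB0 hB *.
split.
  rewrite lerBrDr addrC -lerBrDr ler_pdivrMr //.
  have h1 : (1 + gs) * (3 + q) - 4 = gs + gs ^+ 2 - (gs ^+ 2 - (2 + q) * gs + (1 - q)) by ring.
  rewrite hquad subr0 in h1.
  have h1' : 0 <= q * ((1 + gs) * (3 + q) - 4).
    by apply: mulr_ge0; [lra | rewrite h1; apply: addr_ge0; [lra | apply: sqr_ge0]].
  have h2 : (1 - gs) ^+ 2 = q * (1 + gs).
    by rewrite -hsq sqr_sqrtr //; apply: mulr_ge0; lra.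
  have h3 : 0 <= (1 - gs) * B by apply: mulr_ge0; lra.
  have e1 : ((1 - gs) * B) ^+ 2 = q * (1 + gs) * (3 + q) by rewrite exprMn h2 hB.
  have e2 : (2 * A) ^+ 2 = 4 * q by rewrite exprMn hA; ring.
  rewrite leNgt; apply/negP => hc.
  have hp : 0 < (2 * A - (1 - gs) * B) * (2 * A + (1 - gs) * B).
    by apply: mulr_gt0; lra.
  have e3 : (2 * A - (1 - gs) * B) * (2 * A + (1 - gs) * B) = (2 * A) ^+ 2 - ((1 - gs) * B) ^+ 2 by ring.
  have e4 : q * ((1 + gs) * (3 + q) - 4) = q * (1 + gs) * (3 + q) - 4 * q by ring.
  lra.
rewrite lerD2l lerN2 ler_pdivlMr //.
have hB2 : B < 2.
  rewrite ltNge; apply/negP => hc.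
  have : 2 * 2 <= B * B by apply: ler_pM; lra.
  have hBB : B * B = 3 + q by rewrite -hB expr2.
  lra.
have : 0 <= A * (2 - B) by apply: mulr_ge0; lra.
lra.
Qed.
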